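(* In the $\ell^2$ linear social choice setting, random dictatorship has worst-case distortion at most $O(d^{5/2})$.
   Context: Setting ($\ell^2$ linear social choice). Fix a dimension $d$. An instance consists of $n$ voters and $m$ candidates, each a vector in $\mathbb{R}^d_{\ge 0}$ with Euclidean norm $1$, with every voter vector in $\mathrm{Cone}(C)$ (nonnegative linear combinations of the candidate vectors $C$). Utility $u_v(c)=v^\top c$; each voter reports a ranking of $C$ consistent with its utilities (ties broken arbitrarily). $\mathrm{UW}(c)=\sum_v u_v(c)$. Distortion of a randomized rule on an instance: $\max_c\mathrm{UW}(c)/\mathbb{E}_{c\sim f}[\mathrm{UW}(c)]$; worst-case distortion is the supremum over instances, as a function of $d$. Random dictatorship: pick a voter uniformly at random and output its top-ranked candidate. *)

(* Defs.v *)
From mathcomp Require Import all_boot all_order all_algebra.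
From mathcomp Require Import reals.
Set Implicit Arguments. Unset Strict Implicit. Unset Printing Implicit Defensive.
Import Order.TTheory GRing.Theory Num.Theory.
Local Open Scope ring_scope.

Section L2SocialChoice.
Variables (R : realType) (d n m : nat).

Definition dotp (x y : 'I_d -> R) : R := \sum_(i < d) x i * y i.

Definition unit_nonneg (x : 'I_d -> R) : Prop :=
  (forall i, 0 <= x i) /\ Num.sqrt (dotp x x) = 1.

Definition in_cone (C : 'I_m -> 'I_d -> R) (x : 'I_d -> R) : Prop :=
  exists lam : 'I_m -> R, (forall j, 0 <= lam j) /\
    forall i, x i = \sum_(j < m) lam j * C j i.

Definition l2_instance (V : 'I_n -> 'I_d -> R) (C : 'I_m -> 'I_d -> R) : Prop :=
  (forall v, unit_nonneg (V v)) /\ (forall c, unit_nonneg (C c)) /\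
  (forall v, in_cone C (V v)).

Definition util (V : 'I_n -> 'I_d -> R) (C : 'I_m -> 'I_d -> R) v c : R :=
  dotp (V v) (C c).

Definition UW V C (c : 'I_m) : R := \sum_(v < n) util V C v c.

(* top : voter -> its top-ranked candidate, for a ranking consistent with
   utilities with ties broken arbitrarily *)
Definition valid_top V C (top : 'I_n -> 'I_m) : Prop :=
  forall v c, util V C v c <= util V C v (top v).

Definition rd_welfare V C (top : 'I_n -> 'I_m) : R :=
  (n%:R)^-1 * \sum_(v < n) UW V C (top v).

Definition rd_distortion V C top : R :=
  (\big[Num.max/0]_(c < m) UW V C c) / rd_welfare V C top.

End L2SocialChoice.

(* Main.v *)
Require Import Defs.
From mathcomp Require Import all_boot all_order all_algebra.
From mathcomp Require Import reals.
From mathcomp Require Import ring lra.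
Import Order.TTheory GRing.Theory Num.Theory.
Local Open Scope ring_scope.

Section Aux.
Variable R : realType.

Lemma cs_sum {d : nat} (x : 'I_d -> R) :
  (\sum_(i < d) x i) ^+ 2 <= d%:R * \sum_(i < d) x i ^+ 2.
Proof.
have H : 0 <= \sum_(i < d) \sum_(j < d) (x i - x j) ^+ 2.
  by apply: sumr_ge0 => i _; apply: sumr_ge0 => j _; exact: sqr_ge0.
have E : \sum_(i < d) \sum_(j < d) (x i - x j) ^+ 2 =
   (d%:R * \sum_(i < d) x i ^+ 2) *+ 2 - ((\sum_(i < d) x i) ^+ 2) *+ 2.
  have E1 : forall i j, (x i - x j) ^+ 2 = x i ^+ 2 + x j ^+ 2 - (x i * x j) *+ 2.
    by move=> i j; rewrite sqrrB; ring.
  under eq_bigr => i _ do under eq_bigr => j _ do rewrite E1.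
  under eq_bigr => i _ do rewrite !big_split /= sumrN sumrMnl.
  rewrite !big_split /= sumrN sumrMnl.
  idtac.
  have -> : \sum_(i < d) \sum_(j < d) x i ^+ 2 = d%:R * \sum_(i < d) x i ^+ 2.
    rewrite mulr_sumr; apply: eq_bigr => j _.
    by rewrite sumr_const card_ord mulr_natl.
  rewrite exchange_big /=.
  have -> : \sum_(j < d) \sum_(i < d) x j ^+ 2 = d%:R * \sum_(i < d) x i ^+ 2.
    rewrite mulr_sumr; apply: eq_bigr => j _.
    by rewrite sumr_const card_ord mulr_natl.
  have -> : \sum_(i < d) \sum_(j < d) x i * x j = (\sum_(i < d) x i) ^+ 2.
    rewrite expr2 mulr_suml; apply: eq_bigr => i _; by rewrite mulr_sumr.
  by rewrite mulr2n.
rewrite E in H; lra.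
Qed.


Lemma unit_sq {d : nat} {x : 'I_d -> R} : unit_nonneg x -> dotp x x = 1.
Proof.
case=> _ h.
have h0 : 0 <= dotp x x by apply: sumr_ge0 => i _; by rewrite -expr2 sqr_ge0.
by rewrite -(sqr_sqrtr h0) h expr1n.
Qed.

Lemma dotp_ge0 {d : nat} (x y : 'I_d -> R) :
  (forall i, 0 <= x i) -> (forall i, 0 <= y i) -> 0 <= dotp x y.
Proof. by move=> hx hy; apply: sumr_ge0 => i _; apply: mulr_ge0. Qed.

Lemma coord_le1 {d : nat} (x : 'I_d -> R) i : unit_nonneg x -> x i <= 1.
Proof.
move=> hu; have h1 := unit_sq hu; case: hu => hx _.
have : x i * x i <= dotp x x.
  rewrite /dotp (bigD1 i) //= lerDl; apply: sumr_ge0 => j _; exact: mulr_ge0.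
rewrite h1 => h; have := hx i; nra.
Qed.

Lemma sum_ge1 {d : nat} (x : 'I_d -> R) : unit_nonneg x -> 1 <= \sum_(i < d) x i.
Proof.
move=> hu; have h1 := unit_sq hu; case: hu => hx _.
have h0 : 0 <= \sum_(i < d) x i by apply: sumr_ge0.
have : dotp x x <= (\sum_(i < d) x i) ^+ 2.
  rewrite expr2 mulr_suml; apply: ler_sum => i _; rewrite mulr_sumr.
  rewrite (bigD1 i) //= lerDl; apply: sumr_ge0 => j _; exact: mulr_ge0.
rewrite h1 => h; nra.
Qed.

Lemma dotp_le1 {d : nat} (x y : 'I_d -> R) :
  unit_nonneg x -> unit_nonneg y -> dotp x y <= 1.
Proof.
move=> hx hy; have h1 := unit_sq hx; have h2 := unit_sq hy.
have H : 0 <= \sum_(i < d) (x i - y i) ^+ 2 by apply: sumr_ge0 => i _; exact: sqr_ge0.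
have E : \sum_(i < d) (x i - y i) ^+ 2 = dotp x x + dotp y y - (dotp x y) *+ 2.
  rewrite /dotp -sumrMnl -sumrN -!big_split /=; apply: eq_bigr => i _.
  rewrite sqrrB; ring.
rewrite E h1 h2 in H; lra.
Qed.

Lemma sum_le_s {d : nat} {x : 'I_d -> R} :
  unit_nonneg x -> \sum_(i < d) x i <= Num.sqrt (d%:R).
Proof.
move=> hu; have h1 := unit_sq hu.
have hc := cs_sum x.
have : \sum_(i < d) x i ^+ 2 = 1 by rewrite -h1 /dotp; apply: eq_bigr => i _; rewrite expr2.
move=> e; rewrite e mulr1 in hc.
have hs := sqr_sqrtr (ler0n R d).
have s0 : 0 <= Num.sqrt (d%:R : R) := sqrtr_ge0 _.
rewrite -hs in hc. nra.
Qed.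


Lemma voter_bound {d m : nat} (C : 'I_m -> 'I_d -> R) (v : 'I_d -> R) (t : 'I_m) :
  (forall c, unit_nonneg (C c)) -> unit_nonneg v -> in_cone C v ->
  (forall c, dotp v (C c) <= dotp v (C t)) ->
  1 <= Num.sqrt (d%:R) * dotp v (C t).
Proof.
move=> hC hv [lam [hl hlam]] ht.
have e1 := unit_sq hv.
have E : dotp v v = \sum_(j < m) lam j * dotp v (C j).
  rewrite /dotp.
  under eq_bigr => i _ do rewrite {2}hlam big_distrr.
  rewrite exchange_big /=; apply: eq_bigr => j _.
  rewrite mulr_sumr; apply: eq_bigr => i _; ring.
have L1 : dotp v v <= (\sum_(j < m) lam j) * dotp v (C t).
  rewrite E mulr_suml; apply: ler_sum => j _; apply: ler_wpM2l => //.
have L2 : \sum_(j < m) lam j <= \sum_(i < d) v i.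
  have -> : \sum_(i < d) v i = \sum_(j < m) lam j * \sum_(i < d) C j i.
    under eq_bigr => i _ do rewrite hlam.
    rewrite exchange_big /=; apply: eq_bigr => j _; by rewrite mulr_sumr.
  apply: ler_sum => j _; rewrite -{1}(mulr1 (lam j)); apply: ler_wpM2l => //.
  exact: sum_ge1.
have L3 := sum_le_s hv.
have M0 : 0 <= dotp v (C t) by apply: dotp_ge0; [case: hv | case: (hC t)].
rewrite e1 in L1.
have : \sum_(j < m) lam j <= Num.sqrt (d%:R) by apply: le_trans L3.
move=> L4.
apply: (le_trans L1); apply: ler_wpM2r => //.
Qed.

End Aux.

Theorem theorem15 (R : realType) :
  exists K : R, 0 < K /\
  forall (d n m : nat), (1 <= d)%N ->
  forall (V : 'I_n -> 'I_d -> R) (C : 'I_m -> 'I_d -> R) (top : 'I_n -> 'I_m),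
    l2_instance V C -> valid_top V C top ->
    rd_distortion V C top <= K * ((d%:R) ^+ 2 * Num.sqrt (d%:R)).
Proof.
exists 1; split => //.
move=> d n m hd V C top [hV [hC hcone]] htop.
set s := Num.sqrt (d%:R : R).
have hs2 : s ^+ 2 = d%:R by rewrite sqr_sqrtr // ler0n.
have s0 : 0 <= s := sqrtr_ge0 _.
have d1 : 1 <= (d%:R : R) by rewrite ler1n.
have s1 : 1 <= s by nra.
have rhs0 : 0 <= 1 * ((d%:R : R) ^+ 2 * s) by rewrite mul1r; apply: mulr_ge0 => //; exact: sqr_ge0.
have Opt : \big[Num.max/0]_(c < m) UW V C c <= n%:R.
  apply: (big_ind (fun y => y <= n%:R)) => //.
    move=> x y hx hy; rewrite ge_max hx hy //.
  move=> c _; rewrite /UW.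
  have -> : (n%:R : R) = \sum_(v < n) 1 by rewrite sumr_const card_ord.
  apply: ler_sum => v _; exact: dotp_le1.
set S := \sum_(v < n) UW V C (top v).
case: n V top hV hcone htop Opt @S => [|n] V top hV hcone htop Opt S.
  rewrite /rd_distortion /rd_welfare big_ord0 mulr0 invr0 mulr0 //.
set N := (n.+1)%:R : R.
have N0 : 0 < N by rewrite ltr0n.
set T := \sum_(v < n.+1) dotp (V v) (C (top v)).
have hT : N <= s * T.
  have -> : N = \sum_(v < n.+1) 1 by rewrite sumr_const card_ord.
  rewrite mulr_sumr; apply: ler_sum => v _.
  apply: voter_bound => //; exact: htop.
set A := fun i : 'I_d => \sum_(v < n.+1) V v i * C (top v) i.
have hA : \sum_(i < d) A i = T.
  rewrite /A exchange_big /=; done.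
have hSA : \sum_(i < d) A i ^+ 2 <= S.
  have -> : \sum_(i < d) A i ^+ 2 = \sum_(w < n.+1) \sum_(v < n.+1) \sum_(i < d)
       (V w i * C (top w) i) * (V v i * C (top v) i).
    under eq_bigr => i _ do rewrite /A expr2 mulr_suml; rewrite /=.
    under eq_bigr => i _ do under eq_bigr => w _ do rewrite mulr_sumr.
    rewrite exchange_big /=; apply: eq_bigr => w _.
    by rewrite exchange_big.
  rewrite /S; apply: ler_sum => w _; rewrite /UW; apply: ler_sum => v _.
  rewrite /util /dotp; apply: ler_sum => i _.
  have a1 := @coord_le1 R d _ i (hV w); have a2 := @coord_le1 R d _ i (hC (top v)).
  case: (hV w) => hw _; case: (hV v) => hv _; case: (hC (top w)) => hcw _.
  case: (hC (top v)) => hcv _.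
  have -> : V w i * C (top w) i * (V v i * C (top v) i) =
     (V v i * C (top w) i) * (V w i * C (top v) i) by ring.
  apply: ler_piMr; first by apply: mulr_ge0.
  apply: mulr_ile1 => //.
have hcs := @cs_sum R d A; rewrite hA in hcs.
set D := (d%:R : R) in hs2 d1 rhs0 hcs *.
have hN2 : N ^+ 2 <= D ^+ 2 * S.
  have h1 : N ^+ 2 <= (s * T) ^+ 2 by rewrite ler_sqr // ?nnegrE; [exact: ltW | exact: le_trans hT].
  rewrite exprMn hs2 in h1.
  apply: (le_trans h1); rewrite expr2 -mulrA; apply: ler_wpM2l; [lra|].
  exact: le_trans hcs (ler_wpM2l _ hSA).
have S0 : 0 < S.
  have : 0 < N ^+ 2 by apply: exprn_gt0.
  move=> h; have : 0 < D ^+ 2 * S by apply: lt_le_trans hN2.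
  by rewrite pmulr_rgt0 // exprn_gt0 //; lra.
rewrite /rd_distortion /rd_welfare -/S -/N.
have W0 : 0 < N^-1 * S by rewrite mulr_gt0 // invr_gt0.
rewrite ler_pdivrMr //; apply: (le_trans Opt).
have NN : N * N^-1 = 1 by rewrite mulfV // gt_eqF.
have Ni : 0 < N^-1 by rewrite invr_gt0.
have : N ^+ 2 * N^-1 <= D ^+ 2 * S * N^-1 by apply: ler_wpM2r => //; exact: ltW.
rewrite expr2 -mulrA NN mulr1 => h.
apply: (le_trans h).
have D20 : 0 <= D ^+ 2 * S by apply: mulr_ge0; [exact: sqr_ge0 | exact: ltW].
have : 0 <= D ^+ 2 * S * N^-1 by apply: mulr_ge0 => //; exact: ltW.
move=> h0.
have -> : 1 * (D ^+ 2 * s) * (N^-1 * S) = s * (D ^+ 2 * S * N^-1) by ring.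
rewrite -{1}(mul1r (D ^+ 2 * S * N^-1)); apply: ler_wpM2r => //.
Qed.
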